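(* Let $R$ be a subring of a ring $S$, and assume that every semiprime factor ring of $R$ and of $S$ is left or right Goldie and that the prime radical of every factor ring of $R$ and of $S$ is nilpotent. Then for every $P\in\operatorname{Spec} S$ there exists $Q\in\operatorname{Spec} R$ such that $Q$ is minimal over $P\cap R$ and $Q^S\subseteq P$.
   Context: For an ideal $Q$ of $R$, $Q^S=\operatorname{ann}_S(S/SQ)$, the annihilator of the left $S$-module $S/SQ$. *)

(* Defs.v *)
(* Factor rings R/I are
   handled internally: every notion "of the factor ring R/I" is expressed
   through its standard correspondence with subsets of R containing I. *)
From mathcomp Require Import all_boot all_order all_algebra.
Set Implicit Arguments. Unset Strict Implicit. Unset Printing Implicit Defensive.
Import GRing.Theory.
Local Open Scope ring_scope.

Section RingNotions.
Variable T : nzRingType.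
Implicit Types (I J K L X : T -> Prop).

Definition subP (A B : T -> Prop) : Prop := forall x, A x -> B x.

Definition is_ideal I : Prop :=
  [/\ I 0, (forall x y, I x -> I y -> I (x + y)), (forall x, I x -> I (- x)),
      (forall a x, I x -> I (a * x)) & (forall a x, I x -> I (x * a))].

Definition is_left_ideal L : Prop :=
  [/\ L 0, (forall x y, L x -> L y -> L (x + y)), (forall x, L x -> L (- x))
      & (forall a x, L x -> L (a * x))].

(* prime ideal: proper, and J K ⊆ P implies J ⊆ P or K ⊆ P for ideals J K
   (J K ⊆ P iff all products j k lie in P) *)
Definition prime_ideal P : Prop :=
  [/\ is_ideal P, ~ P 1 &
      forall J K, is_ideal J -> is_ideal K ->
        (forall j k, J j -> K k -> P (j * k)) -> subP J P \/ subP K P].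

(* I is an ideal such that R/I is a semiprime ring
   (no nonzero ideal of R/I has zero square) *)
Definition semiprime_ideal I : Prop :=
  is_ideal I /\
  forall J, is_ideal J -> subP I J ->
    (forall a b, J a -> J b -> I (a * b)) -> subP J I.

(* left annihilator, in R/I, of the image of X (as a subset of R) *)
Definition lann_mod I X : T -> Prop := fun r => forall x, X x -> I (r * x).

(* R/I is left Goldie: ACC on left annihilators and no infinite direct sum
   of nonzero left ideals *)
Definition left_goldie_mod I : Prop :=
  (forall X : nat -> (T -> Prop),
     (forall n, subP (lann_mod I (X n)) (lann_mod I (X n.+1))) ->
     exists n0, forall n, (n0 <= n)%N -> subP (lann_mod I (X n)) (lann_mod I (X n0)))
  /\
  ~ (exists L : nat -> (T -> Prop),
       [/\ (forall i, is_left_ideal (L i) /\ subP I (L i)),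
           (forall i, exists x, L i x /\ ~ I x) &
           (forall (n : nat) (x : nat -> T),
              (forall i, (i < n)%N -> L i (x i)) ->
              I (\sum_(i < n) x i) -> forall i, (i < n)%N -> I (x i))]).

Definition prime_radical_mod I : T -> Prop :=
  fun x => forall P, prime_ideal P -> subP I P -> P x.

Definition nilpotent_mod I (N : T -> Prop) : Prop :=
  exists n : nat, forall x : nat -> T,
    (forall i, (i < n)%N -> N (x i)) -> I (\prod_(i < n) x i).

End RingNotions.

Definition right_goldie_mod (T : nzRingType) (I : T -> Prop) : Prop :=
  @left_goldie_mod (T^c)%type I.

Definition goldie_hyp (T : nzRingType) : Prop :=
  forall I : T -> Prop, semiprime_ideal I ->
    left_goldie_mod I \/ right_goldie_mod I.

Definition nilradical_hyp (T : nzRingType) : Prop :=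
  forall I : T -> Prop, is_ideal I -> nilpotent_mod I (prime_radical_mod I).

Definition minimal_prime_over (T : nzRingType) (A Q : T -> Prop) : Prop :=
  [/\ prime_ideal Q, subP A Q &
      forall Q', prime_ideal Q' -> subP A Q' -> subP Q' Q -> subP Q Q'].

(* For R ⊆ S via the injective ring morphism f, and Q ⊆ R:
   SQ = left ideal of S generated by f(Q);
   Q^S = ann_S(S/SQ) = { s | s x ∈ SQ for all x ∈ S }. *)
Definition left_ext (R S : nzRingType) (f : R -> S) (Q : R -> Prop) : S -> Prop :=
  fun y => exists (n : nat) (s : nat -> S) (q : nat -> R),
    (forall i, (i < n)%N -> Q (q i)) /\ y = \sum_(i < n) s i * f (q i).

Definition ext_ann (R S : nzRingType) (f : R -> S) (Q : R -> Prop) : S -> Prop :=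
  fun s => forall x : S, left_ext f Q (s * x).

(* Main.v *)
Require Import Defs.
From mathcomp Require Import all_boot all_order all_algebra.
From Stdlib Require Import ClassicalEpsilon Classical.
From mathcomp Require Import zify.
Set Implicit Arguments. Unset Strict Implicit. Unset Printing Implicit Defensive.
Import GRing.Theory.
Local Open Scope ring_scope.

Lemma prod_recl (T : nzRingType) n (x : nat -> T) :
  \prod_(i < n.+1) x i = x 0%N * \prod_(i < n) x i.+1.
Proof. by rewrite big_ord_recl; congr (_ * _); apply: eq_bigr => i _; rewrite lift0. Qed.

Lemma prod_cat (T : nzRingType) k2 k1 (q : nat -> T) :
  \prod_(i < k1 + k2) q i = (\prod_(i < k1) q i) * \prod_(i < k2) q (k1 + i)%N.
Proof.
elim: k1 q => [|k1 IH] q.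
  by rewrite big_ord0 mul1r; apply: eq_bigr.
rewrite addSn !prod_recl (IH (fun i => q i.+1)) mulrA.
by congr (_ * _); apply: eq_bigr => i _; rewrite addSn.
Qed.

Section Gen.
Variable T : nzRingType.
Implicit Types (I J K N X : T -> Prop).

Lemma prod_ideal_in I n (x : nat -> T) i :
  is_ideal I -> (i < n)%N -> I (x i) -> I (\prod_(j < n) x j).
Proof.
case=> _ _ _ Il Ir; elim: n x i => [|n IH] x i // lt Ix.
rewrite prod_recl; case: i lt Ix => [|i] lt Ix; first exact: Ir.
by apply: Il; apply: (IH (fun j => x j.+1) i).
Qed.

Lemma prime_prod P n (Js : nat -> T -> Prop) :
  prime_ideal P -> (forall i, (i < n)%N -> is_ideal (Js i)) ->
  (forall x : nat -> T, (forall i, (i < n)%N -> Js i (x i)) -> P (\prod_(i < n) x i)) ->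
  exists2 i, (i < n)%N & subP (Js i) P.
Proof.
move=> [[P0 PD PN Pl Pr] P1 Pp]; elim: n Js => [|n IH] Js Jid H.
  by case: P1; have := H (fun _ => 0); rewrite big_ord0; apply.
pose K' := fun y => forall j, Js 0%N j -> P (j * y).
have K'id : is_ideal K'.
  split; rewrite /K'.
  - by move=> j _; rewrite mulr0.
  - by move=> x y Hx Hy j Hj; rewrite mulrDr; apply: PD; [apply: Hx|apply: Hy].
  - by move=> x Hx j Hj; rewrite mulrN; apply: PN; apply: Hx.
  - move=> a x Hx j Hj; rewrite mulrA; apply: Hx.
    by case: (Jid 0%N isT) => _ _ _ _ Jr; apply: Jr.
  - by move=> a x Hx j Hj; rewrite mulrA; apply: Pr; apply: Hx.
have := Pp (Js 0%N) K' (Jid 0%N isT) K'id (fun j k Hj Hk => Hk j Hj).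
case=> [H0|HK]; first by exists 0%N.
have [i lt Hi] : exists2 i, (i < n)%N & subP (Js i.+1) P.
  apply: IH => [i lt|x Hx]; first by apply: Jid.
  apply: HK => j Hj.
  pose xx := fun i => if i is i'.+1 then x i' else j.
  have := H xx; rewrite (prod_recl n xx); apply; by case.
by exists i.+1.
Qed.

Lemma semiprime_rl N U y : semiprime_ideal N -> is_ideal U ->
  (forall u, U u -> N (u * y)) -> forall u, U u -> N (y * u).
Proof.
move=> [[N0 ND NN Nl Nr] Ns] [U0 UD UN Ul Ur] Hy.
pose J := fun z => (exists u n, [/\ U u, N n & z = u + n]) /\
                   (forall u, U u -> N (u * z)).
have HJ : subP J N.
  apply: Ns.
  - split.
    + split; first by exists 0, 0; rewrite addr0.
      by move=> u _; rewrite mulr0.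
    + move=> x z [[u [n [Hu Hn ->]]] Hx] [[u' [n' [Hu' Hn' ->]]] Hz].
      split; first by exists (u + u'), (n + n'); split; [apply: UD|apply: ND|rewrite addrACA].
      by move=> v Hv; rewrite mulrDr; apply: ND; [apply: Hx|apply: Hz].
    + move=> x [[u [n [Hu Hn ->]]] Hx]; split.
        by exists (- u), (- n); split; [apply: UN|apply: NN|rewrite opprD].
      by move=> v Hv; rewrite mulrN; apply: NN; apply: Hx.
    + move=> a x [[u [n [Hu Hn ->]]] Hx]; split.
        by exists (a * u), (a * n); split; [apply: Ul|apply: Nl|rewrite mulrDr].
      by move=> v Hv; rewrite mulrA; apply: Hx; apply: Ur.
    + move=> a x [[u [n [Hu Hn ->]]] Hx]; split.
        by exists (u * a), (n * a); split; [apply: Ur|apply: Nr|rewrite mulrDl].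
      by move=> v Hv; rewrite mulrA; apply: Nr; apply: Hx.
  - move=> n Hn; split; first by exists 0, n; rewrite add0r.
    by move=> u _; apply: Nl.
  - move=> a b [[u [n [Hu Hn ->]]] Ha] [_ Hb].
    by rewrite mulrDl; apply: ND; [apply: Hb|apply: Nr].
move=> u Hu; apply: HJ; split.
  by exists (y * u), 0; split; [apply: Ul|exact: N0|rewrite addr0].
by move=> v Hv; rewrite mulrA; apply: Nr; apply: Hy.
Qed.

Lemma semiprime_lr N U y : semiprime_ideal N -> is_ideal U ->
  (forall u, U u -> N (y * u)) -> forall u, U u -> N (u * y).
Proof.
move=> [[N0 ND NN Nl Nr] Ns] [U0 UD UN Ul Ur] Hy.
pose J := fun z => (exists u n, [/\ U u, N n & z = u + n]) /\
                   (forall u, U u -> N (z * u)).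
have HJ : subP J N.
  apply: Ns.
  - split.
    + split; first by exists 0, 0; rewrite addr0.
      by move=> u _; rewrite mul0r.
    + move=> x z [[u [n [Hu Hn ->]]] Hx] [[u' [n' [Hu' Hn' ->]]] Hz].
      split; first by exists (u + u'), (n + n'); split; [apply: UD|apply: ND|rewrite addrACA].
      by move=> v Hv; rewrite mulrDl; apply: ND; [apply: Hx|apply: Hz].
    + move=> x [[u [n [Hu Hn ->]]] Hx]; split.
        by exists (- u), (- n); split; [apply: UN|apply: NN|rewrite opprD].
      by move=> v Hv; rewrite mulNr; apply: NN; apply: Hx.
    + move=> a x [[u [n [Hu Hn ->]]] Hx]; split.
        by exists (a * u), (a * n); split; [apply: Ul|apply: Nl|rewrite mulrDr].
      by move=> v Hv; rewrite -mulrA; apply: Nl; apply: Hx.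
    + move=> a x [[u [n [Hu Hn ->]]] Hx]; split.
        by exists (u * a), (n * a); split; [apply: Ur|apply: Nr|rewrite mulrDl].
      by move=> v Hv; rewrite -mulrA; apply: Hx; apply: Ul.
  - move=> n Hn; split; first by exists 0, n; rewrite add0r.
    by move=> u _; apply: Nr.
  - move=> a b Ha [[u [n [Hu Hn ->]]] Hb].
    by rewrite mulrDr; apply: ND; [apply: Ha.2|apply: Nl].
move=> u Hu; apply: HJ; split.
  by exists (u * y), 0; split; [apply: Ur|exact: N0|rewrite addr0].
by move=> v Hv; rewrite -mulrA; apply: Nl; apply: Hy.
Qed.

End Gen.

Section Gen2.
Variable T : nzRingType.
Implicit Types (I J K N X : T -> Prop).

Definition LC X := forall a x, X x -> X (a * x).

Definition ACC N := forall X : nat -> (T -> Prop),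
     (forall n, subP (lann_mod N (X n)) (lann_mod N (X n.+1))) ->
     exists n0, forall n, (n0 <= n)%N -> subP (lann_mod N (X n)) (lann_mod N (X n0)).

Lemma lann_ideal N X : is_ideal N -> LC X -> is_ideal (lann_mod N X).
Proof.
move=> [N0 ND NN Nl Nr] HX; split; rewrite /lann_mod.
- by move=> x _; rewrite mul0r.
- by move=> y z Hy Hz x Hx; rewrite mulrDl; apply: ND; [apply: Hy|apply: Hz].
- by move=> y Hy x Hx; rewrite mulNr; apply: NN; apply: Hy.
- by move=> a y Hy x Hx; rewrite -mulrA; apply: Nl; apply: Hy.
- by move=> a y Hy x Hx; rewrite -mulrA; apply: Hy; apply: HX.
Qed.

Lemma acc_ind N (Phi : (T -> Prop) -> Prop) : ACC N ->
  (forall X, LC X -> (forall X', LC X' -> subP (lann_mod N X) (lann_mod N X') ->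
       ~ subP (lann_mod N X') (lann_mod N X) -> Phi X') -> Phi X) ->
  forall X, LC X -> Phi X.
Proof.
move=> Hacc Hind X0 LC0; apply: NNPP => nP0.
pose good X' := LC X' /\ ~ Phi X'.
pose R X X' := [/\ LC X', subP (lann_mod N X) (lann_mod N X'),
          ~ subP (lann_mod N X') (lann_mod N X) & ~ Phi X'].
have step : forall X, good X -> exists X', R X X'.
  move=> X [LX nX]; apply: NNPP => nex; apply: nX; apply: Hind => // X' LX' s ns.
  apply: NNPP => nX'; apply: nex; by exists X'.
pose g X := epsilon (inhabits X0) (R X).
pose sq := fix sq n := if n is n'.+1 then g (sq n') else X0.
have Hsq : forall n, good (sq n) /\ R (sq n) (sq n.+1).
  elim=> [|n [_ [L1 _ _ n1]]].
    by split; [split|apply: epsilon_spec; apply: step; split].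
  by split; [split|apply: epsilon_spec; apply: step; split].
have [n0 Hn0] := Hacc sq (fun n => let: And4 _ h _ _ := (Hsq n).2 in h).
have [_ [_ _ h _]] := Hsq n0; apply: h; apply: Hn0; exact: leqnSn.
Qed.

Definition Phi N X := exists k (Qs : nat -> T -> Prop),
  (forall i, (i < k)%N -> prime_ideal (Qs i) /\ subP N (Qs i)) /\
  forall q : nat -> T, (forall i, (i < k)%N -> Qs i (q i)) ->
     lann_mod N X (\prod_(i < k) q i).

Lemma goldie_core N : semiprime_ideal N -> ACC N -> forall X, LC X -> Phi N X.
Proof.
move=> Nsp Hacc; have Nid := Nsp.1.
have [N0 ND NN Nl Nr] := Nid.
apply: (acc_ind Hacc) => X LX IH.
have Bid := lann_ideal Nid LX.
have NB : subP N (lann_mod N X) by move=> n Hn x _; apply: Nr.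
have [B1|nB1] := classic (lann_mod N X 1).
  by exists 0%N, (fun _ => N); split=> // q _; rewrite big_ord0.
have [Bp|nBp] := classic (prime_ideal (lann_mod N X)).
  exists 1%N, (fun _ => lann_mod N X); split=> // q Hq.
  by rewrite big_ord1; apply: Hq.
have : ~ forall J K, is_ideal J -> is_ideal K ->
        (forall j k, J j -> K k -> lann_mod N X (j * k)) ->
        subP J (lann_mod N X) \/ subP K (lann_mod N X).
  by move=> H; apply: nBp; split.
move=> /not_all_ex_not [J] /not_all_ex_not [K] H.
have [Jid [Kid [JK]]] : is_ideal J /\ is_ideal K /\
     (forall j k, J j -> K k -> lann_mod N X (j * k)) /\
     ~ subP J (lann_mod N X) /\ ~ subP K (lann_mod N X).
  apply: NNPP => nn; apply: H => Ji Ki JKi; apply: NNPP => nor; apply: nn.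
  by do !split => //; move=> h; apply: nor; [left|right].
move=> [nJ nK].
pose X1 := fun y => exists k x, [/\ K k, X x & y = k * x].
have LX1 : LC X1.
  move=> a y [k [x [Hk Hx ->]]]; exists (a * k), x; split=> //; last by rewrite mulrA.
  by case: Kid => _ _ _ Kl _; apply: Kl.
have B1id := lann_ideal Nid LX1.
pose X2 := fun y => exists x b, [/\ X x, lann_mod N X1 b & y = x * b].
have LX2 : LC X2.
  by move=> a y [x [b [Hx Hb ->]]]; exists (a * x), b; split=> //; [apply: LX|rewrite mulrA].
have s1 : subP (lann_mod N X) (lann_mod N X1).
  by move=> y Hy z [k [x [Hk Hx ->]]]; apply: Hy; apply: LX.
have J1 : subP J (lann_mod N X1).
  by move=> j Hj z [k [x [Hk Hx ->]]]; rewrite mulrA; apply: (JK j k).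
have s2 : subP (lann_mod N X) (lann_mod N X2).
  by move=> y Hy z [x [b [Hx Hb ->]]]; rewrite mulrA; apply: Nr; apply: Hy.
have K2 : subP K (lann_mod N X2).
  move=> k Hk z [x [b [Hx Hb ->]]]; rewrite mulrA.
  apply: (semiprime_rl Nsp B1id) => // b' Hb'; apply: Hb'; by exists k, x.
have B12 : forall b1 b2, lann_mod N X1 b1 -> lann_mod N X2 b2 ->
     lann_mod N X (b1 * b2).
  move=> b1 b2 H1 H2 x Hx; rewrite -mulrA.
  apply: (semiprime_lr Nsp B1id) => // b' Hb'; rewrite -mulrA; apply: H2.
  by exists x, b'.
have [k1 [Q1 [HQ1 P1]]] : Phi N X1.
  apply: IH => // h; apply: nJ => j Hj; apply: h; exact: J1.
have [k2 [Q2 [HQ2 P2]]] : Phi N X2.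
  apply: IH => // h; apply: nK => j Hj; apply: h; exact: K2.
exists (k1 + k2)%N, (fun i => if (i < k1)%N then Q1 i else Q2 (i - k1)%N); split.
  move=> i lt; case: ifP => h; first exact: HQ1.
  apply: HQ2; rewrite ltn_subLR //; rewrite leqNgt h //.
move=> q Hq; rewrite prod_cat; apply: B12.
  apply: P1 => i lt; have := Hq i (ltn_addr _ lt); by rewrite lt.
apply: (P2 (fun i => q (k1 + i)%N)) => i lt; have := Hq (k1 + i)%N; rewrite ltn_add2l lt; have -> : (k1 + i < k1)%N = false by rewrite ltnNge leq_addr.
rewrite addKn.
by apply.
Qed.

End Gen2.

Section Conv.
Variable T : nzRingType.
Notation Tc := (T^c)%type.

Lemma ideal_c1 (I : T -> Prop) : @is_ideal T I -> @is_ideal Tc I.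
Proof. by case=> *; split. Qed.
Lemma ideal_c2 (I : T -> Prop) : @is_ideal Tc I -> @is_ideal T I.
Proof. by case=> *; split. Qed.

Lemma prime_c1 (P : T -> Prop) : @prime_ideal T P -> @prime_ideal Tc P.
Proof.
case=> Pid P1 Pp; split=> //; first exact: ideal_c1.
move=> J K Ji Ki H.
have H' : forall k j, K k -> J j -> P (j * k) by move=> k j Hk Hj; apply: (H j k).
by case: (Pp K J (ideal_c2 Ki) (ideal_c2 Ji) H'); [right|left].
Qed.

Lemma prime_c2 (P : T -> Prop) : @prime_ideal Tc P -> @prime_ideal T P.
Proof.
case=> Pid P1 Pp; split=> //; first exact: ideal_c2.
move=> J K Ji Ki H.
have H' : forall k j, K k -> J j -> P (j * k) by move=> k j Hk Hj; apply: (H j k).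
by case: (Pp K J (ideal_c1 Ki) (ideal_c1 Ji) H'); [right|left].
Qed.

Lemma semiprime_c1 (N : T -> Prop) : @semiprime_ideal T N -> @semiprime_ideal Tc N.
Proof.
case=> Nid Ns; split; first exact: ideal_c1.
move=> J Ji NJ H; apply: Ns => //; first exact: ideal_c2.
by move=> a b Ha Hb; apply: (H b a).
Qed.
End Conv.

Definition Cover (T : nzRingType) (N : T -> Prop) k (Qs : nat -> T -> Prop) :=
  (forall i, (i < k)%N -> prime_ideal (Qs i) /\ subP N (Qs i)) /\
  forall P', prime_ideal P' -> subP N P' -> exists2 i, (i < k)%N & subP (Qs i) P'.

Lemma left_cover (T : nzRingType) (N : T -> Prop) :
  semiprime_ideal N -> ACC N -> exists k Qs, Cover N k Qs.
Proof.
move=> Nsp Hacc.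
have [k [Qs [HQ Hp]]] := goldie_core Nsp Hacc (X := fun _ => True) (fun _ _ _ => I).
exists k, Qs; split=> // P' Pp NP'.
apply: prime_prod => //; first by move=> i lt; case: (HQ i lt) => [[]].
move=> x Hx; apply: NP'; rewrite -[X in N X]mulr1; exact: Hp.
Qed.

Lemma goldie_cover (T : nzRingType) (N : T -> Prop) :
  semiprime_ideal N -> left_goldie_mod N \/ right_goldie_mod N ->
  exists k Qs, Cover N k Qs.
Proof.
move=> Nsp [[Hacc _]|[Hacc _]]; first exact: left_cover.
have [k [Qs [HQ Hp]]] := @left_cover (T^c)%type N (semiprime_c1 Nsp) Hacc.
exists k, Qs; split.
  by move=> i lt; case: (HQ i lt) => h1 h2; split=> //; apply: prime_c2.
move=> P' Pp NP'; exact: Hp (prime_c1 Pp) NP'.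
Qed.

Lemma irred_cover (T : nzRingType) (N : T -> Prop) k Qs :
  Cover N k Qs -> exists k' Qs', Cover N k' Qs' /\
    forall i j, (i < k')%N -> (j < k')%N -> subP (Qs' j) (Qs' i) -> i = j.
Proof.
elim: k Qs => [|k IH] Qs HC.
  by exists 0%N, Qs; split.
have [H|H] := classic (exists i j, [/\ (i < k.+1)%N, (j < k.+1)%N, i <> j &
                                       subP (Qs j) (Qs i)]); last first.
  exists k.+1, Qs; split=> // i j lti ltj s; apply: NNPP => nij; apply: H.
  by exists i, j.
case: H => i [j [lti ltj nij sji]].
pose sh t := if (t < i)%N then t else t.+1.
have shlt : forall t, (t < k)%N -> (sh t < k.+1)%N.
  by move=> t lt; rewrite /sh; case: ifP => _ //; apply: ltnW.
have shinv : forall t, (t < k.+1)%N -> t <> i -> exists2 t', (t' < k)%N & sh t' = t.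
  move=> t lt nti; case: (ltnP t i) => h.
    by exists t; [lia|rewrite /sh h].
  have it : (i < t)%N by rewrite ltn_neqAle h andbT; apply/eqP => e; apply: nti.
  exists t.-1; first by lia.
  rewrite /sh; case: ifP => h2; first by lia.
  by lia.
apply: (IH (fun t => Qs (sh t))); case: HC => HQ Hp; split.
  by move=> t lt; apply: HQ; apply: shlt.
move=> P' Pp NP'; have [t lt st] := Hp P' Pp NP'.
have [e|ne] := classic (t = i).
  have [t' lt' e'] := shinv j ltj (fun e2 => nij (esym e2)).
  by exists t' => //; rewrite e' => x Hx; apply: st; rewrite e; apply: sji.
have [t' lt' e'] := shinv t lt ne.
by exists t' => //; rewrite e'.
Qed.

Lemma sum_recl (T : nzRingType) n (x : nat -> T) :
  \sum_(i < n.+1) x i = x 0%N + \sum_(i < n) x i.+1.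
Proof. by rewrite big_ord_recl; congr (_ + _); apply: eq_bigr => i _; rewrite lift0. Qed.

Lemma sum_cat (T : nzRingType) k2 k1 (q : nat -> T) :
  \sum_(i < k1 + k2) q i = (\sum_(i < k1) q i) + \sum_(i < k2) q (k1 + i)%N.
Proof.
elim: k1 q => [|k1 IH] q.
  by rewrite big_ord0 add0r; apply: eq_bigr.
rewrite addSn !sum_recl (IH (fun i => q i.+1)) addrA.
by congr (_ + _); apply: eq_bigr => i _; rewrite addSn.
Qed.

Section Ext.
Variables (R S : nzRingType) (f : {rmorphism R -> S}).
Implicit Types (Z Y : R -> Prop).

Lemma le0 Z : left_ext f Z 0.
Proof. by exists 0%N, (fun _ => 0), (fun _ => 0); split=> //; rewrite big_ord0. Qed.

Lemma leD Z y z : left_ext f Z y -> left_ext f Z z -> left_ext f Z (y + z).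
Proof.
move=> [n1 [s1 [q1 [H1 ->]]]] [n2 [s2 [q2 [H2 ->]]]].
exists (n1 + n2)%N, (fun i => if (i < n1)%N then s1 i else s2 (i - n1)%N),
       (fun i => if (i < n1)%N then q1 i else q2 (i - n1)%N); split.
  move=> i lt; case: ifP => h; first exact: H1.
  by apply: H2; lia.
rewrite (sum_cat n2 n1 (fun i => (if (i < n1)%N then s1 i else s2 (i - n1)%N) *
   f (if (i < n1)%N then q1 i else q2 (i - n1)%N))).
congr (_ + _); apply: eq_bigr => i _.
  by rewrite ltn_ord.
have -> : (n1 + i < n1)%N = false by lia.
by rewrite addKn.
Qed.

Lemma leM Z a y : left_ext f Z y -> left_ext f Z (a * y).
Proof.
move=> [n [s [q [H ->]]]]; exists n, (fun i => a * s i), q; split=> //.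
by rewrite big_distrr; apply: eq_bigr => i _; rewrite /= mulrA.
Qed.

Lemma leN Z y : left_ext f Z y -> left_ext f Z (- y).
Proof. by move=> h; rewrite -mulN1r; apply: leM. Qed.

Lemma leMono Z Y y : subP Z Y -> left_ext f Z y -> left_ext f Y y.
Proof. by move=> sZ [n [s [q [H ->]]]]; exists n, s, q; split=> // i lt; apply: sZ; apply: H. Qed.

Lemma leSum Z n (y : nat -> S) : (forall i, (i < n)%N -> left_ext f Z (y i)) ->
  left_ext f Z (\sum_(i < n) y i).
Proof.
elim: n y => [|n IH] y H; first by rewrite big_ord0; apply: le0.
rewrite sum_recl; apply: leD; first by apply: H.
by apply: (IH (fun i => y i.+1)) => i lt; apply: H.
Qed.

Lemma le_sub (P : S -> Prop) Z : is_ideal P -> (forall r, Z r -> P (f r)) ->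
  subP (left_ext f Z) P.
Proof.
move=> [P0 PD PN Pl Pr] HZ y [n [s [q [H ->]]]].
elim: n s q H => [|n IH] s q H; first by rewrite big_ord0.
rewrite (sum_recl n (fun i => s i * f (q i))); apply: PD.
  by apply: Pl; apply: HZ; apply: H.
by apply: (IH (fun i => s i.+1) (fun i => q i.+1)) => i lt; apply: H.
Qed.

Lemma ext_ann_ideal Z : is_ideal (ext_ann f Z).
Proof.
split; rewrite /ext_ann.
- by move=> x; rewrite mul0r; apply: le0.
- by move=> s t Hs Ht x; rewrite mulrDl; apply: leD.
- by move=> s Hs x; rewrite mulNr; apply: leN.
- by move=> a s Hs x; rewrite -mulrA; apply: leM.
- by move=> a s Hs x; rewrite -mulrA; apply: Hs.
Qed.

Definition ZY Z Y := fun r => exists z y, [/\ Z z, Y y & r = z * y].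

Lemma le_rmul Z Y w b : left_ext f Z w -> Y b -> left_ext f (ZY Z Y) (w * f b).
Proof.
move=> [n [u [z [H ->]]]] Hb; exists n, u, (fun j => z j * b); split.
  by move=> j lt; exists (z j), b; split=> //; apply: H.
by rewrite big_distrl; apply: eq_bigr => j _; rewrite rmorphM mulrA.
Qed.

Lemma ext_mul Z Y s y : ext_ann f Z s -> left_ext f Y y -> left_ext f (ZY Z Y) (s * y).
Proof.
move=> Hs [n [t [q [H ->]]]]; rewrite big_distrr.
apply: (leSum (y := fun i => s * (t i * f (q i)))) => i lt.
by rewrite mulrA; apply: le_rmul => //; apply: H.
Qed.

Definition prodset k (Zs : nat -> R -> Prop) := fun r =>
  exists q : nat -> R, (forall i, (i < k)%N -> Zs i (q i)) /\ r = \prod_(i < k) q i.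

Lemma ext_prod k (Zs : nat -> R -> Prop) (s : nat -> S) x :
  (forall i, (i < k)%N -> ext_ann f (Zs i) (s i)) ->
  left_ext f (prodset k Zs) ((\prod_(i < k) s i) * x).
Proof.
elim: k Zs s x => [|k IH] Zs s x H.
  rewrite big_ord0 mul1r; exists 1%N, (fun _ => x), (fun _ => 1); split.
    by move=> i _; exists (fun _ => 0); split=> //; rewrite big_ord0.
  by rewrite big_ord1 rmorph1 mulr1.
rewrite (prod_recl k s) -mulrA.
have := IH (fun i => Zs i.+1) (fun i => s i.+1) x (fun i lt => H i.+1 lt).
move=> /(ext_mul (H 0%N isT)); apply: leMono.
move=> r [z [y [Hz [q [Hq ->]] ->]]].
exists (fun i => if i is i'.+1 then q i' else z); split; first by case.
by rewrite (prod_recl k (fun i => if i is i'.+1 then q i' else z)).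
Qed.

End Ext.

Theorem lemma3p14 (R S : nzRingType) (f : {rmorphism R -> S}) :
  injective f ->
  goldie_hyp R -> goldie_hyp S -> nilradical_hyp R -> nilradical_hyp S ->
  forall P : S -> Prop, prime_ideal P ->
  exists Q : R -> Prop,
    minimal_prime_over (fun r => P (f r)) Q /\ subP (ext_ann f Q) P.
Proof.
move=> finj gR gS nR nS P Pp.
have [[P0 PD PN Pl Pr] P1 Pprime] := Pp.
pose A := fun r => P (f r).
have Aid : is_ideal A.
  split; rewrite /A.
  - by rewrite rmorph0.
  - by move=> x y Hx Hy; rewrite rmorphD; apply: PD.
  - by move=> x Hx; rewrite rmorphN; apply: PN.
  - by move=> a x Hx; rewrite rmorphM; apply: Pl.
  - by move=> a x Hx; rewrite rmorphM; apply: Pr.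
pose N := prime_radical_mod A.
have Nid : is_ideal N.
  split; rewrite /N /prime_radical_mod.
  - by move=> Q [[]].
  - by move=> x y Hx Hy Q HQ AQ; have [[_ QD _ _ _] _ _] := HQ; apply: QD; [apply: Hx|apply: Hy].
  - by move=> x Hx Q HQ AQ; have [[_ _ QN _ _] _ _] := HQ; apply: QN; apply: Hx.
  - by move=> a x Hx Q HQ AQ; have [[_ _ _ Ql _] _ _] := HQ; apply: Ql; apply: Hx.
  - by move=> a x Hx Q HQ AQ; have [[_ _ _ _ Qr] _ _] := HQ; apply: Qr; apply: Hx.
have Nsp : semiprime_ideal N.
  split=> // J Jid NJ HJ x Jx Q HQ AQ.
  have HQ' := HQ; case: HQ' => _ _ Qp.
  by case: (Qp J J Jid Jid (fun a b Ha Hb => HJ a b Ha Hb Q HQ AQ)) => h; apply: h.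
have AN : subP A N by move=> r Ar Q _ AQ; apply: AQ.
have [k [Qs HC]] := goldie_cover Nsp (gR N Nsp).
have [k' [Qs' [[HQ Hcov] Hirr]]] := irred_cover HC.
have [m Hm] := nR A Aid.
pose W := ext_ann f N.
have WP : subP W P.
  have := @prime_prod S P m (fun _ => W) Pp (fun _ _ => ext_ann_ideal f N).
  case.
    move=> x Hx; have := ext_prod 1 Hx; rewrite mulr1; apply: le_sub.
      by split.
    by move=> r [q [Hq ->]]; apply: Hm.
  by move=> i _.
have := @prime_prod S P k' (fun i => ext_ann f (Qs' i)) Pp (fun i _ => ext_ann_ideal f _).
case.
  move=> x Hx; apply: WP => y; have := ext_prod y Hx; apply: leMono.
  move=> r [q [Hq ->]] Q' HQ' AQ'.
  have NQ' : subP N Q' by move=> n Hn; apply: Hn.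
  have [j lj sj] := Hcov Q' HQ' NQ'.
  by apply: (@prod_ideal_in R Q' k' q j) => //; [case: HQ' => []|apply: sj; apply: Hq].
move=> i lt sub; exists (Qs' i); split=> //.
have [Qip NQi] := HQ i lt.
split=> // [r Ar|Q' HQ' AQ' sQ']; first by apply: NQi; apply: AN.
have NQ' : subP N Q' by move=> n Hn; apply: Hn.
have [j lj sj] := Hcov Q' HQ' NQ'.
have e : i = j by apply: Hirr => // x Hx; apply: sQ'; apply: sj.
by rewrite e.
Qed.
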